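(* Let $G$ be a finite unweighted undirected graph with $n$ nodes, and let $H$ be the spanning subgraph of $G$ with all nodes of $G$ and no edges. Apply $2$-spanner-completion to $H$. Regardless of the choices made (of violating pairs and of shortest paths), the resulting graph $H$ has at most $O(n^{3/2})$ edges.
   Context: For a graph $F$ and nodes $u,v$, $d_F(u,v)$ denotes the length (number of edges) of a shortest path from $u$ to $v$ in $F$ ($\infty$ if none exists). A spanning subgraph $H$ of $G$ is an additive $k$-spanner of $G$ if $d_H(u,v) \le d_G(u,v)+k$ for every pair of nodes $u,v$. The procedure $k$-spanner-completion applied to a spanning subgraph $H$ of $G$ is: as long as there exists a pair of nodes $u,v$ with $d_H(u,v) > d_G(u,v)+k$, pick such a pair, find a shortest path from $u$ to $v$ in $G$, and add all edges of this path to $H$. When it terminates, $H$ is an additive $k$-spanner of $G$. The $O(\cdot)$ bound refers to an absolute constant independent of $G$ and $n$. *)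

(* Defs.v *)
From mathcomp Require Import all_boot.
Set Implicit Arguments. Unset Strict Implicit. Unset Printing Implicit Defensive.

Section Graphs.
Variable T : finType.

Definition is_graph (E : {set {set T}}) : Prop := forall e, e \in E -> #|e| = 2.

Definition adj (E : {set {set T}}) : rel T := fun x y => [set x; y] \in E.

(* a walk u = x0, x1, ..., xk = v is encoded by p = [:: x1; ...; xk]; length = size p *)
Definition walk (E : {set {set T}}) (u v : T) (p : seq T) : bool :=
  path (adj E) u p && (last u p == v).

Definition dist_le (E : {set {set T}}) (u v : T) (k : nat) : Prop :=
  exists p, walk E u v p /\ size p <= k.

Definition is_dist (E : {set {set T}}) (u v : T) (d : nat) : Prop :=
  dist_le E u v d /\ forall p, walk E u v p -> d <= size p.

Definition shortest_path (E : {set {set T}}) (u v : T) (p : seq T) : Prop :=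
  walk E u v p /\ is_dist E u v (size p).

(* d_H(u,v) > d_G(u,v) + k  (if d_G = oo the pair is never violating) *)
Definition violating (k : nat) (G H : {set {set T}}) (u v : T) : Prop :=
  exists d, is_dist G u v d /\ ~ dist_le H u v (d + k).

Fixpoint path_edges (x : T) (p : seq T) : seq {set T} :=
  match p with
  | [::] => [::]
  | y :: q => [set x; y] :: path_edges y q
  end.

(* completes k G H H' : some run of k-spanner-completion on G starting from H
   (with some choices of violating pairs and shortest paths) terminates with H'. *)
Inductive completes (k : nat) (G : {set {set T}}) :
    {set {set T}} -> {set {set T}} -> Prop :=
| completes_done H :
    (forall u v, ~ violating k G H u v) -> completes k G H H
| completes_step H u v p H' :
    violating k G H u v -> shortest_path G u v p ->
    completes k G (H :|: [set:: path_edges u p]) H' ->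
    completes k G H H'.

End Graphs.

(* Main.v *)
Require Import Defs.
From mathcomp Require Import all_boot.
From mathcomp Require boolp.
From mathcomp Require Import zify.

Set Implicit Arguments. Unset Strict Implicit. Unset Printing Implicit Defensive.

Section Proof.
Variable T : finType.
Implicit Types (E H : {set {set T}}) (u v w x y a b : T) (p q : seq T).

Lemma adjC E x y : adj E x y = adj E y x.
Proof. by rewrite /adj setUC. Qed.

Lemma adj_mono E E' x y : E \subset E' -> adj E x y -> adj E' x y.
Proof. by move=> /subsetP sub; rewrite /adj => /sub. Qed.

Lemma walk_mono E E' u v p : E \subset E' -> walk E u v p -> walk E' u v p.
Proof.
move=> sub /andP[Pp Lp]; rewrite /walk Lp andbT.
by apply: sub_path Pp => x y; apply: adj_mono.
Qed.

Lemma walk_cat E a b c p q : walk E a b p -> walk E b c q -> walk E a c (p ++ q).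
Proof.
by move=> /andP[Pp /eqP Lp] /andP[Pq Lq]; rewrite /walk cat_path last_cat Lp Pp Pq Lq.
Qed.

Lemma walk_rev E a b p : walk E a b p -> walk E b a (rev (belast a p)).
Proof.
move=> /andP[Pp /eqP Lp]; rewrite /walk -Lp rev_path.
apply/andP; split.
  by apply: sub_path Pp => x y; rewrite /= adjC.
by case: p {Pp Lp} => [|y s] //=; rewrite rev_cons last_rcons.
Qed.

Lemma dl_mono E E' a b k : E \subset E' -> dist_le E a b k -> dist_le E' a b k.
Proof. by move=> s [p [Wp Sp]]; exists p; split=> //; apply: walk_mono Wp. Qed.

Lemma dl_le E a b k k' : k <= k' -> dist_le E a b k -> dist_le E a b k'.
Proof. by move=> kk [p [Wp Sp]]; exists p; split=> //; apply: leq_trans kk. Qed.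

Lemma dl_cat E a b c k l :
  dist_le E a b k -> dist_le E b c l -> dist_le E a c (k + l).
Proof.
move=> [p [Wp Sp]] [q [Wq Sq]]; exists (p ++ q); split.
  exact: walk_cat Wp Wq.
by rewrite size_cat leq_add.
Qed.

Lemma dl_sym E a b k : dist_le E a b k -> dist_le E b a k.
Proof.
move=> [p [Wp Sp]]; exists (rev (belast a p)); split; first exact: walk_rev.
by rewrite size_rev size_belast.
Qed.

Lemma dl_edge E a b : adj E a b -> dist_le E a b 1.
Proof. by move=> e; exists [:: b]; rewrite /walk /= e eqxx. Qed.

Lemma dist_lb E a b d k : is_dist E a b d -> dist_le E a b k -> d <= k.
Proof. by move=> [_ H] [p [Wp Sp]]; apply: leq_trans (H p Wp) Sp. Qed.

Lemma dist_uniq E a b d1 d2 : is_dist E a b d1 -> is_dist E a b d2 -> d1 = d2.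
Proof.
move=> D1 D2; apply/eqP; rewrite eqn_leq (dist_lb D1 D2.1).
exact: (dist_lb D2 D1.1).
Qed.

Lemma dist_ex E a b k : dist_le E a b k -> exists d, is_dist E a b d /\ d <= k.
Proof.
elim: k => [|k IH] Dk.
  by exists 0; split=> //; split=> //.
case: (boolp.pselect (dist_le E a b k)) => [/IH [d [Dd dk]]|nD].
  by exists d; split=> //; apply: leq_trans dk _.
exists k.+1; split=> //; split=> // p Wp.
rewrite ltnNge; apply/negP => sp; apply: nD; by exists p.
Qed.

Definition xn u p i := last u (take i p).

Lemma size_path_edges u p : size (path_edges u p) = size p.
Proof. by elim: p u => //= y q IH u; rewrite IH. Qed.

Lemma nth_path_edges u p i : i < size p ->
  nth set0 (path_edges u p) i = [set xn u p i; xn u p i.+1].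
Proof.
rewrite /xn; elim: p u i => //= y q IH u [|i] /=; first by rewrite take0.
by move=> ip; rewrite IH.
Qed.

Lemma path_in_edges E u p : {subset path_edges u p <= E} -> path (adj E) u p.
Proof.
elim: p u => //= y q IH u sub; apply/andP; split.
  by apply: sub; rewrite inE eqxx.
by apply: IH => e He; apply: sub; rewrite inE He orbT.
Qed.

Lemma path_edges_sub E u p : path (adj E) u p -> {subset path_edges u p <= E}.
Proof.
elim: p u => //= y q IH u /andP[e P] f; rewrite inE => /orP[/eqP->//|].
exact: IH.
Qed.

Lemma walk_take E u v p i : walk E u v p -> walk E u (xn u p i) (take i p).
Proof.
move=> /andP[Pp _]; rewrite /walk /xn eqxx andbT.
by move: Pp; rewrite -{1}(cat_take_drop i p) cat_path => /andP[].
Qed.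

Lemma walk_drop E u v p i : walk E u v p -> walk E (xn u p i) v (drop i p).
Proof.
move=> /andP[Pp Lp]; rewrite /walk /xn.
by move: Pp Lp; rewrite -{1 2}(cat_take_drop i p) cat_path last_cat => /andP[_ ->] ->.
Qed.

Lemma sum_in_card (X : finType) (A : {set X}) : \sum_y (y \in A : nat) = #|A|.
Proof. by rewrite -sum1_card [in RHS]big_mkcond /=; apply: eq_bigr => y _; case: (y \in A). Qed.

Variables (G : {set {set T}}) (dd : nat).

Definition Nb H x := [set y | adj H x y].
Definition deg H x := #|Nb H x|.
Definition Lpot H := \sum_x minn (deg H x) dd.
Definition good H a b k := forall d, is_dist G a b d -> dist_le H a b (d + k).
Definition GS H := [set t : T * T * 'I_3 | boolp.asbool (good H t.1.1 t.1.2 t.2)].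
Definition Gam H := #|GS H|.
Definition Phi H := dd * Lpot H + 3 * Gam H.

Section Step.
Variables (H : {set {set T}}) (u v : T) (p : seq T).
Hypotheses (HG : H \subset G) (viol : violating 2 G H u v) (sp : shortest_path G u v p).
Let H' := H :|: [set:: path_edges u p].
Let D := size p.
Let x i := xn u p i.

Let HH' : H \subset H'. Proof. exact: subsetUl. Qed.
Let WG : walk G u v p. Proof. exact: sp.1. Qed.
Let dG : is_dist G u v D. Proof. exact: sp.2. Qed.

Let H'G : H' \subset G.
Proof.
rewrite subUset HG /=; apply/subsetP => e; rewrite inE.
by apply: path_edges_sub; case/andP: WG.
Qed.

Let WH' : walk H' u v p.
Proof.
case/andP: WG => _ L; rewrite /walk L andbT; apply: path_in_edges => e He.
by rewrite in_setU inE He orbT.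
Qed.

Let nviol : ~ dist_le H u v (D + 2).
Proof. by case: viol => d [Dd nd]; rewrite (dist_uniq dG Dd). Qed.

Let dl_pre E i : walk E u v p -> i <= D -> dist_le E u (x i) i.
Proof.
move=> WE iD; exists (take i p); split; first exact: walk_take WE.
by rewrite size_takel.
Qed.

Let dl_suf E i : walk E u v p -> dist_le E (x i) v (D - i).
Proof. by move=> WE; exists (drop i p); split; [exact: walk_drop WE| rewrite size_drop]. Qed.

Let shortcut i j w : i <= j -> j <= D -> adj G (x i) w -> adj G (x j) w -> j <= i + 2.
Proof.
move=> ij jD Ai Aj.
have := dl_cat (dl_cat (dl_cat (dl_pre (i:=i) WG (leq_trans ij jD)) (dl_edge Ai))
   (dl_sym (dl_edge Aj))) (dl_suf j WG).
move/(dist_lb dG); lia.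
Qed.

Let drop_lemma i w : i <= D -> adj H' (x i) w ->
  exists a k, k < 3 /\ good H' a w k /\ ~ good H a w k.
Proof.
move=> iD A.
have d1 : dist_le H' u w (i + 1) := dl_cat (dl_pre (i:=i) WH' iD) (dl_edge A).
have d2 : dist_le H' v w (D - i + 1) := dl_cat (dl_sym (dl_suf i WH')) (dl_edge A).
have [gu [Du gu_le]] := dist_ex (dl_mono H'G d1).
have [gv [Dv gv_le]] := dist_ex (dl_mono H'G d2).
have Dle : D <= gu + gv := dist_lb dG (dl_cat Du.1 (dl_sym Dv.1)).
have gu' : good H' u w (i + 1 - gu).
  by move=> d Dd; rewrite -(dist_uniq Du Dd); apply: dl_le d1; lia.
have gv' : good H' v w (D - i + 1 - gv).
  by move=> d Dd; rewrite -(dist_uniq Dv Dd); apply: dl_le d2; lia.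
case: (boolp.pselect (good H u w (i + 1 - gu))) => gu_ok; last first.
  by exists u, (i + 1 - gu); split; [lia|split].
case: (boolp.pselect (good H v w (D - i + 1 - gv))) => gv_ok; last first.
  by exists v, (D - i + 1 - gv); split; [lia|split].
exfalso; apply: nviol.
have h1 := gu_ok gu Du; have h2 := gv_ok gv Dv.
by apply: dl_le (dl_cat h1 (dl_sym h2)); lia.
Qed.

Lemma step : H' \subset G /\ #|H'| * dd + Phi H <= #|H| * dd + Phi H'.
Proof.
split; first exact: H'G.
pose J : {set 'I_D} := [set i : 'I_D | dd < deg H' (x i)].
pose U := \bigcup_(i in J) Nb H' (x i).
pose S : {set T * T} :=
  [set xy | (deg H' xy.1 <= dd) && adj H' xy.1 xy.2 && ~~ adj H xy.1 xy.2].
have cA : #|U| + Gam H <= Gam H'.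
  have GSsub : GS H \subset GS H'.
    apply/subsetP => t; rewrite !inE => /boolp.asboolP g.
    by apply/boolp.asboolP => d Dd; apply: dl_mono HH' (g d Dd).
  have Usub : U \subset [set t.1.2 | t in GS H' :\: GS H].
    apply/subsetP => w /bigcupP [i Ji]; rewrite /Nb inE => A.
    have [a [k [k3 [g' ng]]]] := drop_lemma (ltnW (ltn_ord i)) A.
    apply/imsetP; exists (a, w, inord k) => //.
    have kk : (inord k : 'I_3) = k :> nat by rewrite inordK.
    rewrite in_setD !inE /= kk; apply/andP; split.
      by apply/negP => /boolp.asboolP.
    exact/boolp.asboolP.
  have c1 := subset_leq_card Usub.
  have c2 := leq_imset_card (fun t : T * T * 'I_3 => t.1.2) (GS H' :\: GS H).
  have c3 := subset_leq_card GSsub.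
  move: c2; rewrite cardsD.
  have -> : GS H' :&: GS H = GS H by apply/setIidPr.
  move=> c2; have := leq_trans c1 c2; move: c3; rewrite /Gam; lia.
have cB : #|J| * dd <= 3 * #|U|.
  have s1 : #|J| * dd <= \sum_(i in J) deg H' (x i).
    by rewrite -sum_nat_const; apply: leq_sum => i; rewrite inE => /ltnW.
  have s2 : \sum_(i in J) deg H' (x i) = \sum_w \sum_(i in J) (w \in Nb H' (x i) : nat).
    by rewrite exchange_big /=; apply: eq_bigr => i _; rewrite /deg sum_in_card.
  have s3 : forall w, \sum_(i in J) (w \in Nb H' (x i) : nat) <= 3 * (w \in U).
    move=> w.
    pose K := [set i in J | w \in Nb H' (x i)].
    have -> : \sum_(i in J) (w \in Nb H' (x i) : nat) = #|K|.
      rewrite -sum_in_card big_mkcond; apply: eq_bigr => i _.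
      by rewrite [i \in K]inE; case: (i \in J).
    case wU: (w \in U); last first.
      rewrite leqn0 cards_eq0; apply/eqP/setP => i; rewrite [i \in K]inE in_set0.
      apply/negP => /andP[Ji Ni].
      suff : w \in U by rewrite wU.
      by apply/bigcupP; exists i.
    have inj : {in K &, injective (fun i : 'I_D => (inord (i %% 3) : 'I_3))}.
      move=> i j; rewrite /K /Nb !inE => /andP[_ Ni] /andP[_ Nj] /(congr1 val) /=.
      rewrite !inordK ?ltn_pmod // => eqm.
      have ai := adj_mono H'G Ni; have aj := adj_mono H'G Nj.
      apply/val_inj => /=.
      have iD := ltn_ord i; have jD := ltn_ord j.
      case: (leqP i j) => ij.
        have := shortcut ij (ltnW jD) ai aj; lia.
      have := shortcut (ltnW ij) (ltnW iD) aj ai; lia.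
    rewrite -(card_in_imset inj) muln1.
    by apply: leq_trans (max_card _) _; rewrite card_ord.
  have s4 : \sum_w \sum_(i in J) (w \in Nb H' (x i) : nat) <= 3 * #|U|.
    rewrite -sum_in_card big_distrr /=; exact: leq_sum.
  lia.
have cC : #|S| + Lpot H <= Lpot H'.
  have -> : #|S| = \sum_a \sum_y ((a, y) \in S : nat).
    by rewrite pair_bigA /= -sum_in_card; apply: eq_bigr => -[a b].
  rewrite /Lpot -big_split; apply: leq_sum => a _ /=.
  have NN : Nb H a \subset Nb H' a.
    by apply/subsetP => y; rewrite /Nb !inE; apply: adj_mono HH'.
  have dle : deg H a <= deg H' a := subset_leq_card NN.
  case: (leqP (deg H' a) dd) => hd.
    have -> : \sum_y ((a, y) \in S : nat) = #|Nb H' a :\: Nb H a|.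
      rewrite -sum_in_card; apply: eq_bigr => y _.
      rewrite /Nb !inE /= hd /=.
      by case: (adj H' a y); case: (adj H a y).
    rewrite cardsD.
    have -> : Nb H' a :&: Nb H a = Nb H a by apply/setIidPr.
    move: hd dle; rewrite /deg; lia.
  rewrite big1 ?add0n; first by lia.
  by move=> y _; rewrite inE /= leqNgt hd.
have cD : #|H' :\: H| <= #|S| + #|J|.
  pose A := [set [set xy.1; xy.2] | xy in S].
  pose B := [set nth set0 (path_edges u p) i | i : 'I_D in J].
  have sub : H' :\: H \subset A :|: B.
    apply/subsetP => e; rewrite in_setD in_setU => /andP[eH /orP[eH2|ep]].
      by rewrite eH2 in eH.
    rewrite inE in ep.
    have eH' : e \in H' by rewrite in_setU inE ep orbT.
    have [i ip ei0] := nthP set0 ep.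
    have ei := ei0.
    rewrite size_path_edges in ip.
    rewrite nth_path_edges // in ei.
    case: (leqP (deg H' (x i)) dd) => h1.
      apply/setUP; left; apply/imsetP; exists (x i, x i.+1); last by rewrite -ei.
      by rewrite inE /= h1 /adj ei eH' eH.
    case: (leqP (deg H' (x i.+1)) dd) => h2.
      apply/setUP; left; apply/imsetP; exists (x i.+1, x i); last first.
        by rewrite -ei /= setUC.
      by rewrite inE /= h2 /adj setUC ei eH' eH.
    apply/setUP; right; apply/imsetP; exists (Ordinal ip) => //.
    by rewrite inE.
  have := subset_leq_card sub; rewrite cardsU.
  have cA' : #|A| <= #|S| by apply: leq_imset_card.
  have cB' : #|B| <= #|J| by apply: leq_imset_card.
  move=> h; apply: leq_trans h _; apply: leq_trans (leq_subr _ _) _; exact: leq_add.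
have eH : #|H'| = #|H| + #|H' :\: H|.
  rewrite cardsD.
  have -> : H' :&: H = H by apply/setIidPr.
  have := subset_leq_card HH'; lia.
have h2 : #|H' :\: H| * dd <= (#|S| + #|J|) * dd by rewrite leq_mul2r cD orbT.
have h3 : dd * (#|S| + Lpot H) <= dd * Lpot H' by rewrite leq_mul2l cC orbT.
rewrite /Phi eH; lia.
Qed.

End Step.

Lemma main H H' : completes 2 G H H' -> H \subset G ->
  H' \subset G /\ #|H'| * dd + Phi H <= #|H| * dd + Phi H'.
Proof.
elim=> [H0 _ sub | H0 u v p H1 vi sp _ IH sub]; first by split.
have [s1 ineq1] := step sub vi sp.
have [s2 ineq2] := IH s1.
split=> //; lia.
Qed.

End Proof.

Lemma sqrt_ex n : exists d, 0 < d /\ n <= d * d /\ d * d <= 4 * n + 1.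
Proof.
have ex : exists d, (0 < d) && (n <= d * d).
  by exists n.+1; apply/andP; split => //; nia.
case: (ex_minnP ex) => d /andP[d0 nd] dmin.
exists d; split=> //; split=> //.
case: (leqP d 1) => [d1|d2]; first by nia.
have : ~~ ((0 < d.-1) && (n <= d.-1 * d.-1)).
  by apply/negP => /dmin; lia.
rewrite negb_and -ltnNge => /orP[|lt]; first by lia.
have h : d <= 2 * d.-1 by lia.
have := leq_mul h h; nia.
Qed.

Theorem theorem2 :
  exists C : nat, forall (T : finType) (G : {set {set T}}), is_graph G ->
    forall H : {set {set T}}, completes 2 G set0 H ->
      #|H| ^ 2 <= C * #|T| ^ 3.
Proof.
exists 196 => T G _ H cH.
have [dd [d0 [nd dn]]] := sqrt_ex #|T|.
have [HG ineq] := main dd cH (sub0set G).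
rewrite cards0 mul0n add0n in ineq.
have L : Lpot dd H <= #|T| * dd.
  rewrite /Lpot -sum_nat_const; apply: leq_sum => x _; exact: geq_minr.
have Ga : Gam G H <= #|T| * #|T| * 3.
  by apply: leq_trans (max_card _) _; rewrite !card_prod card_ord.
set n := #|T| in nd dn L Ga *.
set h := #|H| in ineq *.
have P : Phi G dd H <= dd * (n * dd) + 9 * (n * n).
  by rewrite /Phi; have := leq_mul (leqnn dd) L; lia.
have X : h * dd <= dd * (n * dd) + 9 * (n * n) by lia.
have X2 : h * dd <= 14 * (n * n).
  apply: (leq_trans X); have := leq_mul (leqnn n) dn; nia.
have X3 : (h * dd) * (h * dd) <= (14 * (n * n)) * (14 * (n * n)) := leq_mul X2 X2.
have X4 : n * (h * h) <= (dd * dd) * (h * h) := leq_mul nd (leqnn _).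
case: (posnP n) => [n0|npos].
  have : dd = 1 by move: dn; rewrite n0; nia.
  move=> d1; rewrite d1 muln1 n0 in X; rewrite n0 /=; move: X; rewrite /h; nia.
have : n * (h * h) <= n * (196 * (n * n * n)) by nia.
rewrite leq_pmul2l //; nia.
Qed.
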